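(* Let $\alpha>0$, $M>0$ and $0<\eta<1/2$. There exist $\varepsilon>0$ and $l\in\mathbb N$ such that: if $S\in\mathcal A(M,\varepsilon,\alpha)$ and $C_S$ is a minimal set of some $C^1$ diffeomorphism $f:S^1\to S^1$, then there exists $m_0=m_0(f)$ such that $\mathcal N(g_T)<\eta$ for every $m$-block $T$ with $m>m_0$, and whenever $T=\phi(j_1,\dots,j_m)(L)$ is an $m$-block with $m>m_0$ and $g_T\big(\phi(j_1,\dots,j_m,i_1,\dots,i_p)(J_i)\big)=J_j$ for some $1\le i,j\le k-1$ and $(i_1,\dots,i_p)$, then $0\le p\le l$.
   Context: Setting: $k\ge2$; $I_1,\dots,I_k$ pairwise disjoint compact intervals in $[0,1)$ ordered left to right; $L\subset[0,1)$ compact interval containing $I=I_1\cup\dots\cup I_k$; $S^1=\mathbb R/\mathbb Z\cong[0,1)$. $\mathcal S^{r}(I_1,\dots,I_k,L)$: $C^r$ maps $S:I\to L$ with $S(I_j)=L$ for all $j$ and $|S'|>1$; $C_S=\{x\in I:S^n(x)\in I\ \forall n\ge1\}$. For a $C^1$ map $F$ with nonvanishing derivative on an interval $T$, $\mathcal N(F)=\sup_{x,y\in T}\log\frac{|F'(x)|}{|F'(y)|}$; for $S$, $\mathcal N(S)=\max_j\sup_{x,y\in I_j}\log\frac{|S'(x)|}{|S'(y)|}$. $\mathcal A(M,\varepsilon,\alpha)$ is the set of $S\in\mathcal S^{1+\alpha}(I_1,\dots,I_k,L)$ with $\mathcal N(S)<\varepsilon$ and $|\log\frac{|S'(x)|}{|S'(y)|}|\le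 M|x-y|^\alpha$ for $x,y$ in a common $I_j$. Inverse branches $\phi_i=(S|_{I_i})^{-1}$, $\phi(i_1,\dots,i_m)=\phi_{i_1}\circ\dots\circ\phi_{i_m}$; $\phi(i_1,\dots,i_m)(L)$ is an $m$-block. $J_i$ ($1\le i\le k-1$) is the open interval between $I_i$ and $I_{i+1}$; $\phi(i_1,\dots,i_r)(J_i)$ is a gap of level $r$. A minimal set of $f$ is a nonempty closed invariant set in which every orbit is dense. For such $f$ and an $m$-block $T$, $u_T=\max\{n\in\mathbb N: S^{n-1}(f(T))\subset I\}$ and $g_T=S^{u_T}\circ f|_T$. *)

(* Defs.v *)
From Stdlib Require Import Reals Lra List.
Open Scope R_scope.

Definition has_deriv_within (D : R -> Prop) (f : R -> R) (x l : R) : Prop :=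
  forall eps, 0 < eps -> exists delta, 0 < delta /\
    forall y, D y -> y <> x -> Rabs (y - x) < delta ->
      Rabs ((f y - f x) / (y - x) - l) < eps.

Fixpoint iterR (n : nat) (f : R -> R) (x : R) : R :=
  match n with O => x | Datatypes.S n' => f (iterR n' f x) end.

(* I_j = [a j, b j], j = 1..k ;  L = [c, d] *)
Definition Ival (a b : nat -> R) (j : nat) (x : R) : Prop := a j <= x <= b j.
Definition Iset (k : nat) (a b : nat -> R) (x : R) : Prop :=
  exists j, (1 <= j <= k)%nat /\ Ival a b j x.
Definition Lset (c d : R) (x : R) : Prop := c <= x <= d.
Definition Jgap (a b : nat -> R) (i : nat) (x : R) : Prop := b i < x < a (i + 1)%nat.

Definition interval_config (k : nat) (a b : nat -> R) (c d : R) : Prop :=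
  (2 <= k)%nat /\ 0 <= c /\ d < 1 /\ c <= a 1%nat /\ b k <= d /\
  (forall j, (1 <= j <= k)%nat -> a j < b j) /\
  (forall j, (1 <= j < k)%nat -> b j < a (j + 1)%nat).

Definition in_class_S (k : nat) (a b : nat -> R) (c d alpha : R) (S Sd : R -> R) : Prop :=
  forall j, (1 <= j <= k)%nat ->
    (forall x, Ival a b j x -> has_deriv_within (Ival a b j) S x (Sd x)) /\
    (exists H, forall x y, Ival a b j x -> Ival a b j y ->
        Rabs (Sd x - Sd y) <= H * Rpower (Rabs (x - y)) alpha) /\
    (forall x, Ival a b j x -> Lset c d (S x)) /\
    (forall y, Lset c d y -> exists x, Ival a b j x /\ S x = y) /\
    (forall x, Ival a b j x -> 1 < Rabs (Sd x)).

Definition N_lt (D : R -> Prop) (Fd : R -> R) (e : R) : Prop :=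
  exists e', e' < e /\
    forall x y, D x -> D y -> ln (Rabs (Fd x) / Rabs (Fd y)) <= e'.

Definition in_class_A (k : nat) (a b : nat -> R) (c d M eps alpha : R) (S Sd : R -> R) : Prop :=
  in_class_S k a b c d alpha S Sd /\
  (forall j, (1 <= j <= k)%nat -> N_lt (Ival a b j) Sd eps) /\
  (forall j x y, (1 <= j <= k)%nat -> Ival a b j x -> Ival a b j y ->
     Rabs (ln (Rabs (Sd x) / Rabs (Sd y))) <= M * Rpower (Rabs (x - y)) alpha).

Definition C_S (k : nat) (a b : nat -> R) (S : R -> R) (x : R) : Prop :=
  Iset k a b x /\ forall n, (1 <= n)%nat -> Iset k a b (iterR n S x).

(* C^1 diffeomorphisms of S^1 = R/Z, given by a lift F with derivative Fd *)
Definition circle_diffeo_lift (F Fd : R -> R) : Prop :=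
  (forall x, derivable_pt_lim F x (Fd x)) /\ continuity Fd /\
  (forall x, Fd x <> 0) /\
  ((forall x, F (x + 1) = F x + 1) \/ (forall x, F (x + 1) = F x - 1)).

(* the induced map on S^1 = [0,1) *)
Definition circ_map (F : R -> R) (x : R) : R := frac_part (F x).

Definition cdist (x y : R) : R := Rmin (Rabs (x - y)) (1 - Rabs (x - y)).

Definition in_orbit (f : R -> R) (x y : R) : Prop :=
  exists n : nat, iterR n f x = y \/ iterR n f y = x.

Definition minimal_set (f : R -> R) (C : R -> Prop) : Prop :=
  (exists x, C x) /\
  (forall x, C x -> 0 <= x < 1) /\
  (forall x, 0 <= x < 1 ->
     (forall eps, 0 < eps -> exists y, C y /\ cdist x y < eps) -> C x) /\
  (forall x, C x -> C (f x)) /\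
  (forall y, C y -> exists x, C x /\ f x = y) /\
  (forall x y, C x -> C y -> forall eps, 0 < eps ->
     exists z, in_orbit f x z /\ cdist y z < eps).

Definition valid_word (k : nat) (w : list nat) : Prop :=
  Forall (fun i => (1 <= i <= k)%nat) w.

(* phi(i_1,...,i_m)(X) = phi_{i_1} o ... o phi_{i_m} (X), for X subset of L,
   phi_i = (S|_{I_i})^{-1} *)
Fixpoint phiset (a b : nat -> R) (S : R -> R) (w : list nat) (X : R -> Prop) : R -> Prop :=
  match w with
  | nil => X
  | cons i w' => fun x => Ival a b i x /\ phiset a b S w' X (S x)
  end.

Definition uT_cond (k : nat) (a b : nat -> R) (S f : R -> R) (T : R -> Prop) (n : nat) : Prop :=
  (1 <= n)%nat /\
  forall x, T x -> forall j, (j <= n - 1)%nat -> Iset k a b (iterR j S (f x)).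

Definition is_uT (k : nat) (a b : nat -> R) (S f : R -> R) (T : R -> Prop) (u : nat) : Prop :=
  uT_cond k a b S f T u /\ forall n, uT_cond k a b S f T n -> (n <= u)%nat.

Definition gT (S f : R -> R) (u : nat) (x : R) : R := iterR u S (f x).

Definition N_map_lt (D : R -> Prop) (g : R -> R) (e : R) : Prop :=
  exists gd, (forall x, D x -> has_deriv_within D g x (gd x) /\ gd x <> 0) /\ N_lt D gd e.

Definition maps_onto (g : R -> R) (X Y : R -> Prop) : Prop :=
  (forall x, X x -> Y (g x)) /\ (forall y, Y y -> exists x, X x /\ g x = y).

(* Main.v *)
Require Import Defs.
From Stdlib Require Import Reals Lra Lia List ZArith.
From Coquelicot Require Coquelicot.
Open Scope R_scope.


Definition convex (A : R -> Prop) := forall x y z, A x -> A y -> x <= z <= y -> A z.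

Definition cont_within (D : R -> Prop) (f : R -> R) (x : R) :=
  forall eps, 0 < eps -> exists delta, 0 < delta /\
    forall y, D y -> Rabs (y - x) < delta -> Rabs (f y - f x) < eps.

Lemma hdw_elim D f x l : has_deriv_within D f x l ->
  forall eps, 0 < eps -> exists delta, 0 < delta /\
    forall y, D y -> Rabs (y - x) < delta ->
      Rabs (f y - f x - l * (y - x)) <= eps * Rabs (y - x).
Proof.
  intros H eps He. destruct (H eps He) as [del [Hd Hy]]. exists del; split; auto.
  intros y Dy Hyx. destruct (Req_dec y x) as [->|Hne].
  - replace (f x - f x - l * (x - x)) with 0 by ring. rewrite Rabs_R0. 
    replace (x - x) with 0 by ring. rewrite Rabs_R0; lra.
  - specialize (Hy y Dy Hne Hyx).
    assert (Hz : y - x <> 0) by lra.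
    replace (f y - f x - l * (y - x)) with (((f y - f x) / (y - x) - l) * (y - x)) by (field; auto).
    rewrite Rabs_mult. apply Rmult_le_compat_r. apply Rabs_pos. lra.
Qed.

Lemma hdw_intro D f x l :
  (forall eps, 0 < eps -> exists delta, 0 < delta /\
    forall y, D y -> Rabs (y - x) < delta ->
      Rabs (f y - f x - l * (y - x)) <= eps * Rabs (y - x)) -> has_deriv_within D f x l.
Proof.
  intros H eps He. destruct (H (eps/2) ltac:(lra)) as [del [Hd Hy]]. exists del; split; auto.
  intros y Dy Hne Hyx. specialize (Hy y Dy Hyx).
  assert (Hz : y - x <> 0) by lra.
  assert (Ha : 0 < Rabs (y - x)) by (apply Rabs_pos_lt; auto).
  replace ((f y - f x) / (y - x) - l) with ((f y - f x - l * (y - x)) / (y - x)) by (field; auto).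
  unfold Rdiv. rewrite Rabs_mult, Rabs_inv.
  apply Rmult_lt_reg_r with (Rabs (y - x)); auto.
  rewrite Rmult_assoc, Rinv_l by lra. nra.
Qed.

Lemma hdw_cont D f x l : has_deriv_within D f x l -> cont_within D f x.
Proof.
  intros H eps He. destruct (hdw_elim D f x l H 1 Rlt_0_1) as [del [Hd Hy]].
  exists (Rmin del (eps / (Rabs l + 2))). split.
  { apply Rmin_pos; auto. apply Rdiv_lt_0_compat; auto. pose proof (Rabs_pos l); lra. }
  intros y Dy Hyx. assert (H1 : Rabs (y - x) < del) by (eapply Rlt_le_trans; [apply Hyx| apply Rmin_l]).
  assert (H2 : Rabs (y - x) < eps / (Rabs l + 2)) by (eapply Rlt_le_trans; [apply Hyx| apply Rmin_r]).
  specialize (Hy y Dy H1).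
  assert (Hla : 0 <= Rabs l) by apply Rabs_pos.
  assert (H3 : Rabs (y - x) * (Rabs l + 2) < eps).
  { apply Rmult_lt_reg_r with (/ (Rabs l + 2)). apply Rinv_0_lt_compat; lra.
    rewrite Rmult_assoc, Rinv_r by lra. rewrite Rmult_1_r. exact H2. }
  replace (f y - f x) with ((f y - f x - l * (y - x)) + l * (y - x)) by ring.
  eapply Rle_lt_trans. apply Rabs_triang. rewrite Rabs_mult.
  assert (0 <= Rabs (y - x)) by apply Rabs_pos. nra.
Qed.

Lemma hdw_ext D f g x l : (forall y, D y -> f y = g y) -> D x ->
  has_deriv_within D f x l -> has_deriv_within D g x l.
Proof.
  intros Hfg Dx H eps He. destruct (H eps He) as [del [Hd Hy]]. exists del; split; auto.
  intros y Dy Hne Hyx. rewrite <- (Hfg y Dy), <- (Hfg x Dx). auto.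
Qed.

Lemma hdw_sub D E f x l : (forall y, D y -> E y) ->
  has_deriv_within E f x l -> has_deriv_within D f x l.
Proof.
  intros HDE H eps He. destruct (H eps He) as [del [Hd Hy]]. exists del; split; auto.
Qed.

Lemma hdw_of_lim D f x l : derivable_pt_lim f x l -> has_deriv_within D f x l.
Proof.
  intros H eps He. destruct (H eps He) as [del Hy]. exists del; split. apply cond_pos.
  intros y Dy Hne Hyx. specialize (Hy (y - x) ltac:(lra) Hyx).
  replace (x + (y - x)) with y in Hy by ring. exact Hy.
Qed.

Lemma hdw_chain A B h g x hl gl : A x ->
  has_deriv_within A h x hl -> has_deriv_within B g (h x) gl ->
  (forall y, A y -> B (h y)) ->
  has_deriv_within A (fun y => g (h y)) x (gl * hl).
Proof.
  intros Ax Hh Hg HAB. apply hdw_intro. intros eps He.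
  assert (Ha1 : 0 <= Rabs hl) by apply Rabs_pos.
  assert (Ha2 : 0 <= Rabs gl) by apply Rabs_pos.
  set (e2 := Rmin 1 (eps / (2 * (Rabs gl + 1)))).
  set (e1 := eps / (2 * (Rabs hl + 1))).
  assert (He2 : 0 < e2). { apply Rmin_pos. lra. apply Rdiv_lt_0_compat; lra. }
  assert (He2' : e2 <= 1) by apply Rmin_l.
  assert (He2'' : e2 * (2 * (Rabs gl + 1)) <= eps).
  { assert (e2 <= eps / (2 * (Rabs gl + 1))) by apply Rmin_r.
    apply Rmult_le_reg_r with (/ (2 * (Rabs gl + 1))). apply Rinv_0_lt_compat; lra.
    rewrite Rmult_assoc, Rinv_r by lra. lra. }
  assert (He1 : 0 < e1) by (apply Rdiv_lt_0_compat; lra).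
  assert (He1' : e1 * (2 * (Rabs hl + 1)) = eps) by (unfold e1; field; lra).
  destruct (hdw_elim _ _ _ _ Hh e2 He2) as [d2 [Hd2 Hy2]].
  destruct (hdw_elim _ _ _ _ Hg e1 He1) as [d1 [Hd1 Hy1]].
  exists (Rmin d2 (d1 / (Rabs hl + 1))). split.
  { apply Rmin_pos; auto. apply Rdiv_lt_0_compat; lra. }
  intros y Ay Hyx.
  assert (H1 : Rabs (y - x) < d2) by (eapply Rlt_le_trans; [apply Hyx| apply Rmin_l]).
  assert (H2 : Rabs (y - x) < d1 / (Rabs hl + 1)) by (eapply Rlt_le_trans; [apply Hyx| apply Rmin_r]).
  specialize (Hy2 y Ay H1).
  set (r := Rabs (y - x)) in *. assert (Hr : 0 <= r) by apply Rabs_pos.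
  assert (Hhy : Rabs (h y - h x) <= (Rabs hl + 1) * r).
  { replace (h y - h x) with ((h y - h x - hl * (y - x)) + hl * (y - x)) by ring.
    eapply Rle_trans. apply Rabs_triang. rewrite Rabs_mult. fold r. nra. }
  assert (Hhy2 : Rabs (h y - h x) < d1).
  { assert (r * (Rabs hl + 1) < d1).
    { apply Rmult_lt_reg_r with (/ (Rabs hl + 1)). apply Rinv_0_lt_compat; lra.
      rewrite Rmult_assoc, Rinv_r by lra. lra. }
    nra. }
  specialize (Hy1 (h y) (HAB y Ay) Hhy2).
  replace (g (h y) - g (h x) - gl * hl * (y - x)) with
    ((g (h y) - g (h x) - gl * (h y - h x)) + gl * (h y - h x - hl * (y - x))) by ring.
  eapply Rle_trans. apply Rabs_triang. rewrite Rabs_mult.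
  assert (Rabs gl * Rabs (h y - h x - hl * (y - x)) <= Rabs gl * (e2 * r))
    by (apply Rmult_le_compat_l; auto).
  assert (e1 * Rabs (h y - h x) <= e1 * ((Rabs hl + 1) * r)) by (apply Rmult_le_compat_l; lra).
  assert (e1 * ((Rabs hl + 1) * r) = eps / 2 * r).
  { replace (eps / 2) with (e1 * (Rabs hl + 1)) by (rewrite <- He1'; field; lra). ring. }
  assert (Rabs gl * (e2 * r) <= eps / 2 * r).
  { assert (Rabs gl * e2 <= eps / 2) by nra. nra. }
  lra.
Qed.


Definition clamp (x y t : R) := Rmax x (Rmin y t).

Lemma clamp_in x y t : x <= y -> x <= clamp x y t <= y.
Proof. intros. unfold clamp, Rmax, Rmin. repeat destruct Rle_dec; lra. Qed.
Lemma clamp_id x y t : x <= t <= y -> clamp x y t = t.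
Proof. intros. unfold clamp, Rmax, Rmin. repeat destruct Rle_dec; lra. Qed.
Lemma clamp_lip x y t s : x <= y -> Rabs (clamp x y t - clamp x y s) <= Rabs (t - s).
Proof. intros. unfold clamp, Rmax, Rmin. repeat destruct Rle_dec;
  unfold Rabs; repeat destruct Rcase_abs; lra. Qed.

Lemma cont_pt_intro f x : (forall eps, 0 < eps -> exists delta, 0 < delta /\
    forall y, Rabs (y - x) < delta -> Rabs (f y - f x) < eps) -> continuity_pt f x.
Proof.
  intros H. unfold continuity_pt, continue_in, limit1_in, limit_in. simpl. unfold R_dist.
  intros eps He. destruct (H eps He) as [del [Hd Hy]]. exists del; split; auto.
  intros y [_ Hy2]. auto.
Qed.

Lemma cont_clamp x y h : x <= y ->
  (forall t, x <= t <= y -> cont_within (fun z => x <= z <= y) h t) ->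
  continuity (fun t => h (clamp x y t)).
Proof.
  intros Hxy H t. apply cont_pt_intro. intros eps He.
  destruct (H (clamp x y t) (clamp_in x y t Hxy) eps He) as [del [Hd Hz]].
  exists del; split; auto. intros s Hs. apply Hz. apply clamp_in; auto.
  eapply Rle_lt_trans. apply clamp_lip; auto. auto.
Qed.

Lemma cont_within_sub D E f x : (forall y, D y -> E y) -> cont_within E f x -> cont_within D f x.
Proof. intros HDE H eps He. destruct (H eps He) as [del [Hd Hy]]. exists del; split; auto. Qed.

Lemma IVT_within A h x y v : convex A -> A x -> A y ->
  (forall t, A t -> cont_within A h t) ->
  Rmin (h x) (h y) <= v <= Rmax (h x) (h y) ->
  exists z, Rmin x y <= z <= Rmax x y /\ A z /\ h z = v.
Proof.
  intros Hc Ax Ay Hh Hv.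
  set (lo := Rmin x y). set (hi := Rmax x y).
  assert (Hlh : lo <= hi) by (unfold lo, hi, Rmin, Rmax; destruct Rle_dec; lra).
  assert (HA : forall z, lo <= z <= hi -> A z).
  { intros z Hz. unfold lo, hi, Rmin, Rmax in Hz. destruct Rle_dec.
    apply (Hc x y z); auto. apply (Hc y x z); auto; lra. }
  assert (Hcont : continuity (fun t => h (clamp lo hi t))).
  { apply cont_clamp; auto. intros t Ht. apply cont_within_sub with A. exact HA. apply Hh; auto. }
  assert (Ex : clamp lo hi x = x) by (apply clamp_id; unfold lo, hi, Rmin, Rmax; destruct Rle_dec; lra).
  assert (Ey : clamp lo hi y = y) by (apply clamp_id; unfold lo, hi, Rmin, Rmax; destruct Rle_dec; lra).
  destruct (Coquelicot.Continuity.IVT_gen _ x y v Hcont) as [z [Hz1 Hz2]].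
  { rewrite Ex, Ey. auto. }
  exists z. fold lo hi in Hz1. rewrite clamp_id in Hz2 by auto. split; auto.
Qed.

Lemma MVT_within A h hd x y : convex A -> A x -> A y ->
  (forall z, A z -> has_deriv_within A h z (hd z)) ->
  exists z, Rmin x y <= z <= Rmax x y /\ A z /\ h y - h x = hd z * (y - x).
Proof.
  intros Hc Ax Ay Hh.
  set (lo := Rmin x y). set (hi := Rmax x y).
  assert (Hlh : lo <= hi) by (unfold lo, hi, Rmin, Rmax; destruct Rle_dec; lra).
  assert (HA : forall z, lo <= z <= hi -> A z).
  { intros z Hz. unfold lo, hi, Rmin, Rmax in Hz. destruct Rle_dec.
    apply (Hc x y z); auto. apply (Hc y x z); auto; lra. }
  assert (Hcont : continuity (fun t => h (clamp lo hi t))).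
  { apply cont_clamp; auto. intros t Ht. apply cont_within_sub with A. exact HA.
    eapply hdw_cont. apply Hh; auto. }
  assert (Ex : clamp lo hi x = x) by (apply clamp_id; unfold lo, hi, Rmin, Rmax; destruct Rle_dec; lra).
  assert (Ey : clamp lo hi y = y) by (apply clamp_id; unfold lo, hi, Rmin, Rmax; destruct Rle_dec; lra).
  destruct (Coquelicot.Derive.MVT_gen (fun t => h (clamp lo hi t)) x y hd) as [z [Hz1 Hz2]].
  - fold lo hi. intros t Ht. apply Coquelicot.Derive.is_derive_Reals.
    intros eps He. destruct (Hh t (HA t ltac:(lra)) eps He) as [del [Hd Hy]].
    assert (Hp : 0 < Rmin del (Rmin (t - lo) (hi - t))).
    { apply Rmin_pos; auto. apply Rmin_pos; lra. }
    exists (mkposreal _ Hp). simpl. intros e Hne He'.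
    assert (H1 : Rabs e < del) by (eapply Rlt_le_trans; [apply He'| apply Rmin_l]).
    assert (H2 : Rabs e < Rmin (t - lo) (hi - t)) by (eapply Rlt_le_trans; [apply He'| apply Rmin_r]).
    assert (H3 : Rabs e < t - lo) by (eapply Rlt_le_trans; [apply H2| apply Rmin_l]).
    assert (H4 : Rabs e < hi - t) by (eapply Rlt_le_trans; [apply H2| apply Rmin_r]).
    assert (He2 : lo <= t + e <= hi) by (unfold Rabs in *; destruct Rcase_abs; lra).
    rewrite (clamp_id lo hi (t + e)) by auto. rewrite (clamp_id lo hi t) by lra.
    specialize (Hy (t + e) (HA _ He2) ltac:(lra)). replace (t + e - t) with e in Hy by ring.
    apply Hy; auto.
  - intros t _. apply Hcont.
  - exists z. fold lo hi in Hz1. rewrite Ex, Ey in Hz2. split; auto.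
Qed.


Lemma fin_min (n : nat) (g : nat -> R) : (forall j, (1 <= j <= n)%nat -> 0 < g j) ->
  exists m, 0 < m /\ forall j, (1 <= j <= n)%nat -> m <= g j.
Proof.
  induction n as [|n IH]; intros H.
  - exists 1. split. lra. intros j Hj. lia.
  - destruct IH as [m [Hm Hj]]. { intros j Hj. apply H; lia. }
    exists (Rmin m (g (Datatypes.S n))). split. apply Rmin_pos; auto. apply H; lia.
    intros j Hj'. destruct (Nat.eq_dec j (Datatypes.S n)) as [->|Hne]. apply Rmin_r.
    eapply Rle_trans. apply Rmin_l. apply Hj. lia.
Qed.

Definition gapb (k : nat) (a b : nat -> R) (g : R) :=
  0 < g /\ forall j, (1 <= j < k)%nat -> b j + g <= a (j + 1)%nat.

Lemma gap_exists k a b c d : interval_config k a b c d -> exists g, gapb k a b g.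
Proof.
  intros [Hk [Hc [Hd [Hca [Hbd [Hab Hba]]]]]].
  destruct (fin_min (k - 1) (fun j => a (j + 1)%nat - b j)) as [g [Hg Hj]].
  { intros j Hj. specialize (Hba j ltac:(lia)). lra. }
  exists g. split; auto. intros j Hj1. specialize (Hj j ltac:(lia)). lra.
Qed.

Lemma ord_gap k a b c d g : interval_config k a b c d -> gapb k a b g ->
  forall i j, (1 <= i)%nat -> (i < j)%nat -> (j <= k)%nat -> b i + g <= a j.
Proof.
  intros [Hk [Hc [Hd [Hca [Hbd [Hab Hba]]]]]] [Hg Hgj] i j Hi Hij Hjk.
  induction j as [|j IH]. lia.
  destruct (Nat.eq_dec i j) as [->|Hne].
  - replace (Datatypes.S j) with (j + 1)%nat by lia. apply Hgj. lia.
  - specialize (IH ltac:(lia) ltac:(lia)). specialize (Hab j ltac:(lia)).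
    specialize (Hba j ltac:(lia)). replace (Datatypes.S j) with (j + 1)%nat by lia. lra.
Qed.

Lemma a_ge_c k a b c d : interval_config k a b c d -> forall j, (1 <= j <= k)%nat -> c <= a j.
Proof.
  intros Hcf j Hj. destruct (gap_exists _ _ _ _ _ Hcf) as [g Hg].
  pose proof Hcf as [Hk [Hc [Hd [Hca [Hbd [Hab Hba]]]]]].
  destruct (Nat.eq_dec j 1) as [->|Hne]. auto.
  pose proof (ord_gap _ _ _ _ _ _ Hcf Hg 1 j ltac:(lia) ltac:(lia) ltac:(lia)).
  specialize (Hab 1%nat ltac:(lia)). destruct Hg. lra.
Qed.

Lemma b_le_d k a b c d : interval_config k a b c d -> forall j, (1 <= j <= k)%nat -> b j <= d.
Proof.
  intros Hcf j Hj. destruct (gap_exists _ _ _ _ _ Hcf) as [g Hg].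
  pose proof Hcf as [Hk [Hc [Hd [Hca [Hbd [Hab Hba]]]]]].
  destruct (Nat.eq_dec j k) as [->|Hne]. auto.
  pose proof (ord_gap _ _ _ _ _ _ Hcf Hg j k ltac:(lia) ltac:(lia) ltac:(lia)).
  specialize (Hab k ltac:(lia)). destruct Hg. lra.
Qed.

Lemma len_bound k a b c d g : interval_config k a b c d -> gapb k a b g ->
  forall j, (1 <= j <= k)%nat -> b j - a j <= d - c - g.
Proof.
  intros Hcf Hg j Hj. pose proof Hcf as [Hk [Hc [Hd [Hca [Hbd [Hab Hba]]]]]].
  destruct (Nat.eq_dec j k) as [->|Hne].
  - pose proof (ord_gap _ _ _ _ _ _ Hcf Hg 1 k ltac:(lia) ltac:(lia) ltac:(lia)).
    pose proof (Hab 1%nat ltac:(lia)). lra.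
  - pose proof (ord_gap _ _ _ _ _ _ Hcf Hg j k ltac:(lia) ltac:(lia) ltac:(lia)).
    pose proof (a_ge_c _ _ _ _ _ Hcf j Hj). pose proof (Hab k ltac:(lia)). lra.
Qed.

Lemma Iset_L k a b c d x : interval_config k a b c d -> Iset k a b x -> Lset c d x.
Proof.
  intros Hcf [j [Hj Hx]]. pose proof (a_ge_c _ _ _ _ _ Hcf j Hj).
  pose proof (b_le_d _ _ _ _ _ Hcf j Hj). unfold Ival, Lset in *. lra.
Qed.

Lemma Ival_L k a b c d j x : interval_config k a b c d -> (1 <= j <= k)%nat -> Ival a b j x -> Lset c d x.
Proof. intros. apply (Iset_L k a b); auto. exists j; auto. Qed.

Lemma Jgap_L k a b c d i x : interval_config k a b c d -> (1 <= i <= k - 1)%nat -> Jgap a b i x -> Lset c d x.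
Proof.
  intros Hcf Hi Hx. pose proof Hcf as [Hk [Hc [Hd [Hca [Hbd [Hab Hba]]]]]].
  pose proof (a_ge_c _ _ _ _ _ Hcf i ltac:(lia)). pose proof (b_le_d _ _ _ _ _ Hcf (i+1) ltac:(lia)).
  pose proof (Hab i ltac:(lia)). pose proof (Hab (i+1)%nat ltac:(lia)).
  unfold Jgap, Lset in *. lra.
Qed.

Lemma Jgap_notI k a b c d i x : interval_config k a b c d -> (1 <= i <= k - 1)%nat -> Jgap a b i x -> ~ Iset k a b x.
Proof.
  intros Hcf Hi Hx [j [Hj Hxj]]. destruct (gap_exists _ _ _ _ _ Hcf) as [g Hg].
  pose proof Hcf as [Hk [Hc [Hd [Hca [Hbd [Hab Hba]]]]]]. unfold Jgap, Ival in *.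
  destruct (Compare_dec.le_lt_dec j i).
  - destruct (Nat.eq_dec j i) as [->|]. lra.
    pose proof (ord_gap _ _ _ _ _ _ Hcf Hg j i ltac:(lia) ltac:(lia) ltac:(lia)).
    pose proof (Hab i ltac:(lia)). destruct Hg. lra.
  - destruct (Nat.eq_dec j (i+1)) as [->|]. lra.
    pose proof (ord_gap _ _ _ _ _ _ Hcf Hg (i+1) j ltac:(lia) ltac:(lia) ltac:(lia)).
    pose proof (Hab (i+1)%nat ltac:(lia)). destruct Hg. lra.
Qed.

Lemma near_same k a b c d g : interval_config k a b c d -> gapb k a b g ->
  forall i j x y, (1 <= i <= k)%nat -> (1 <= j <= k)%nat -> Ival a b i x -> Ival a b j y ->
  Rabs (y - x) < g -> i = j.
Proof.
  intros Hcf Hg i j x y Hi Hj Hx Hy Hxy. destruct (Nat.lt_total i j) as [H|[H|H]]; auto;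
  exfalso; unfold Ival in *.
  - pose proof (ord_gap _ _ _ _ _ _ Hcf Hg i j ltac:(lia) H ltac:(lia)).
    unfold Rabs in Hxy; destruct Rcase_abs; lra.
  - pose proof (ord_gap _ _ _ _ _ _ Hcf Hg j i ltac:(lia) H ltac:(lia)).
    unfold Rabs in Hxy; destruct Rcase_abs; lra.
Qed.

Lemma Ival_convex a b j : convex (Ival a b j).
Proof. intros x y z Hx Hy Hz. unfold Ival in *. lra. Qed.


Lemma exp_le x y : x <= y -> exp x <= exp y.
Proof. intros [H|H]. left; apply exp_increasing; auto. subst; lra. Qed.

Lemma ln_div x y : 0 < x -> 0 < y -> ln (x / y) = ln x - ln y.
Proof. intros. unfold Rdiv. rewrite ln_mult, ln_Rinv; auto. apply Rinv_0_lt_compat; auto. Qed.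

Lemma ln_le x y : 0 < x -> x <= y -> ln x <= ln y.
Proof. intros Hx [H|H]. left; apply ln_increasing; auto. subst; lra. Qed.

Definition kap (c d g : R) := ln ((d - c) / (d - c - g)).

Lemma cd_pos k a b c d g : interval_config k a b c d -> gapb k a b g -> 0 < d - c - g.
Proof.
  intros Hcf Hg. pose proof (len_bound _ _ _ _ _ _ Hcf Hg 1 ltac:(destruct Hcf; lia)).
  destruct Hcf as [Hk [_ [_ [_ [_ [Hab _]]]]]]. specialize (Hab 1%nat ltac:(lia)). lra.
Qed.

Lemma kap_pos k a b c d g : interval_config k a b c d -> gapb k a b g -> 0 < kap c d g.
Proof.
  intros Hcf Hg. pose proof (cd_pos _ _ _ _ _ _ Hcf Hg). destruct Hg as [Hg _].
  unfold kap. rewrite <- ln_1. apply ln_increasing. lra.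
  apply Rmult_lt_reg_r with (d - c - g); auto. unfold Rdiv. rewrite Rmult_assoc, Rinv_l by lra. lra.
Qed.

Lemma S_deriv_I k a b c d M eps alpha s sd g :
  interval_config k a b c d -> in_class_A k a b c d M eps alpha s sd -> gapb k a b g ->
  forall x, Iset k a b x -> has_deriv_within (Iset k a b) s x (sd x).
Proof.
  intros Hcf [HS _] Hg x [j [Hj Hx]].
  destruct (HS j Hj) as [Hder _]. intros e He.
  destruct (Hder x Hx e He) as [del [Hdel Hy]].
  exists (Rmin del g). split. apply Rmin_pos; auto. destruct Hg; auto.
  intros y [j' [Hj' Hy']] Hne Hyx.
  assert (j' = j). { symmetry. apply (near_same k a b c d g Hcf Hg j j' x y); auto.
    eapply Rlt_le_trans. apply Hyx. apply Rmin_r. }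
  subst j'. apply Hy; auto. eapply Rlt_le_trans. apply Hyx. apply Rmin_l.
Qed.

Lemma sd_big k a b c d M eps alpha s sd g :
  interval_config k a b c d -> in_class_A k a b c d M eps alpha s sd -> gapb k a b g ->
  eps <= kap c d g / 2 ->
  forall j x, (1 <= j <= k)%nat -> Ival a b j x -> exp (kap c d g / 2) <= Rabs (sd x).
Proof.
  intros Hcf HA Hg Heps j x Hj Hx. pose proof HA as [HS [HN _]].
  destruct (HS j Hj) as [Hder [_ [Hmap [Hsurj Hgt]]]].
  pose proof (cd_pos _ _ _ _ _ _ Hcf Hg) as Hcdg. pose proof Hg as [Hg0 _].
  destruct (Hsurj c ltac:(unfold Lset; lra)) as [xc [Hxc Exc]].
  destruct (Hsurj d ltac:(unfold Lset; lra)) as [xd [Hxd Exd]].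
  destruct (MVT_within (Ival a b j) s sd xc xd (Ival_convex a b j) Hxc Hxd Hder) as [z [_ [Hz Ez]]].
  rewrite Exc, Exd in Ez. pose proof (len_bound _ _ _ _ _ _ Hcf Hg j Hj) as Hl.
  assert (Hxx : Rabs (xd - xc) <= d - c - g) by (unfold Ival in *; unfold Rabs; destruct Rcase_abs; lra).
  assert (Hsz : (d - c) / (d - c - g) <= Rabs (sd z)).
  { apply Rmult_le_reg_r with (d - c - g); auto. unfold Rdiv. rewrite Rmult_assoc, Rinv_l by lra.
    rewrite Rmult_1_r. assert (E1 : d - c = Rabs (sd z * (xd - xc))) by (rewrite <- Ez; rewrite Rabs_right; lra).
    rewrite Rabs_mult in E1. pose proof (Rabs_pos (sd z)).
    assert (Rabs (sd z) * Rabs (xd - xc) <= Rabs (sd z) * (d - c - g)) by (apply Rmult_le_compat_l; auto).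
    lra. }
  destruct (HN j Hj) as [e' [He' Hle]]. specialize (Hle z x Hz Hx).
  pose proof (Hgt z Hz). pose proof (Hgt x Hx).
  rewrite ln_div in Hle by lra.
  assert (ln (Rabs (sd z)) - kap c d g / 2 <= ln (Rabs (sd x))) by lra.
  assert (kap c d g <= ln (Rabs (sd z))).
  { unfold kap. apply ln_le; auto. apply Rdiv_lt_0_compat; lra. }
  rewrite <- (exp_ln (Rabs (sd x))) by lra. apply exp_le. lra.
Qed.

Definition SB k a b p q := exists j, (1 <= j <= k)%nat /\ Ival a b j p /\ Ival a b j q.

Lemma expand_step k a b c d M eps alpha s sd g :
  interval_config k a b c d -> in_class_A k a b c d M eps alpha s sd -> gapb k a b g ->
  eps <= kap c d g / 2 ->
  forall p q, SB k a b p q -> Rabs (p - q) * exp (kap c d g / 2) <= Rabs (s p - s q).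
Proof.
  intros Hcf HA Hg Heps p q [j [Hj [Hp Hq]]]. pose proof HA as [HS _].
  destruct (HS j Hj) as [Hder _].
  destruct (MVT_within (Ival a b j) s sd q p (Ival_convex a b j) Hq Hp Hder) as [z [_ [Hz Ez]]].
  rewrite Ez, Rabs_mult, Rmult_comm. apply Rmult_le_compat_r. apply Rabs_pos.
  eapply sd_big; eauto.
Qed.

Lemma iter_shift (f : R -> R) n x : iterR (Datatypes.S n) f x = iterR n f (f x).
Proof. induction n as [|n IH]; simpl in *; auto. rewrite <- IH. reflexivity. Qed.

Lemma expand k a b c d M eps alpha s sd g :
  interval_config k a b c d -> in_class_A k a b c d M eps alpha s sd -> gapb k a b g ->
  eps <= kap c d g / 2 ->
  forall N p q, (forall n, (n < N)%nat -> SB k a b (iterR n s p) (iterR n s q)) ->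
  Rabs (p - q) * exp (INR N * (kap c d g / 2)) <= Rabs (iterR N s p - iterR N s q).
Proof.
  intros Hcf HA Hg Heps N. induction N as [|N IH]; intros p q H.
  - simpl. rewrite Rmult_0_l, exp_0. lra.
  - rewrite !iter_shift. rewrite S_INR.
    replace ((INR N + 1) * (kap c d g / 2)) with (kap c d g / 2 + INR N * (kap c d g / 2)) by ring.
    rewrite exp_plus. rewrite <- Rmult_assoc.
    eapply Rle_trans; [| apply IH].
    + apply Rmult_le_compat_r. left; apply exp_pos. eapply expand_step; eauto. apply (H 0%nat). lia.
    + intros n Hn. rewrite <- !iter_shift. apply H. lia.
Qed.

Lemma term_bounds k a b c d M eps alpha s sd :
  in_class_A k a b c d M eps alpha s sd ->
  forall p q, SB k a b p q ->
  Rabs (ln (Rabs (sd p)) - ln (Rabs (sd q))) < eps /\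
  Rabs (ln (Rabs (sd p)) - ln (Rabs (sd q))) <= M * Rpower (Rabs (p - q)) alpha.
Proof.
  intros [HS [HN HM]] p q [j [Hj [Hp Hq]]].
  destruct (HS j Hj) as [_ [_ [_ [_ Hgt]]]]. pose proof (Hgt p Hp). pose proof (Hgt q Hq).
  split.
  - destruct (HN j Hj) as [e' [He' Hle]]. pose proof (Hle p q Hp Hq). pose proof (Hle q p Hq Hp).
    rewrite ln_div in * by lra. apply Rabs_def1; lra.
  - rewrite <- ln_div by lra. apply (HM j); auto.
Qed.


Fixpoint lsum (s sd : R -> R) (N : nat) (z : R) : R :=
  match N with O => 0 | Datatypes.S N' => ln (Rabs (sd z)) + lsum s sd N' (s z) end.
Fixpoint dS (s sd : R -> R) (N : nat) (z : R) : R :=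
  match N with O => 1 | Datatypes.S N' => dS s sd N' (s z) * sd z end.
Fixpoint geo (t : R) (N : nat) : R :=
  match N with O => 0 | Datatypes.S N' => t ^ N' + geo t N' end.

Lemma dS_ln s sd N : forall z, (forall n, (n < N)%nat -> sd (iterR n s z) <> 0) ->
  dS s sd N z <> 0 /\ ln (Rabs (dS s sd N z)) = lsum s sd N z.
Proof.
  induction N as [|N IH]; intros z H; simpl.
  - split. lra. rewrite Rabs_R1, ln_1. auto.
  - destruct (IH (s z)) as [H1 H2].
    { intros n Hn. rewrite <- iter_shift. apply H. lia. }
    pose proof (H 0%nat ltac:(lia)) as H0. simpl in H0.
    split. apply Rmult_integral_contrapositive; auto.
    rewrite Rabs_mult, ln_mult, H2 by (apply Rabs_pos_lt; auto). ring.
Qed.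

Lemma geo_bound t N : 0 <= t < 1 -> geo t N <= / (1 - t).
Proof.
  intros Ht. assert (E : geo t N = (1 - t ^ N) / (1 - t)).
  { induction N as [|N IH]; simpl. field; lra. rewrite IH. field; lra. }
  rewrite E. unfold Rdiv. pattern (/ (1 - t)) at 2; rewrite <- Rmult_1_l.
  apply Rmult_le_compat_r. left; apply Rinv_0_lt_compat; lra.
  pose proof (pow_le t N ltac:(lra)). lra.
Qed.

Lemma geo_nonneg t N : 0 <= t -> 0 <= geo t N.
Proof. intros Ht. induction N; simpl. lra. pose proof (pow_le t N Ht). lra. Qed.

Lemma dist_sum k a b c d M eps alpha s sd g (A t : R) :
  interval_config k a b c d -> in_class_A k a b c d M eps alpha s sd -> gapb k a b g ->
  eps <= kap c d g / 2 ->
  (forall p q N, SB k a b p q -> Rabs (p - q) * exp (INR (Datatypes.S N) * (kap c d g / 2)) <= 1 ->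
     Rabs (ln (Rabs (sd p)) - ln (Rabs (sd q))) <= A * t ^ N) ->
  forall N p q, (forall n, (n < N)%nat -> SB k a b (iterR n s p) (iterR n s q)) ->
  Rabs (lsum s sd N p - lsum s sd N q) <= A * geo t N.
Proof.
  intros Hcf HA Hg Heps HT N. induction N as [|N IH]; intros p q H; simpl.
  - rewrite Rminus_0_r, Rabs_R0. lra.
  - replace (ln (Rabs (sd p)) + lsum s sd N (s p) - (ln (Rabs (sd q)) + lsum s sd N (s q))) with
      ((ln (Rabs (sd p)) - ln (Rabs (sd q))) + (lsum s sd N (s p) - lsum s sd N (s q))) by ring.
    eapply Rle_trans. apply Rabs_triang. rewrite Rmult_plus_distr_l. apply Rplus_le_compat.
    + apply HT. apply (H 0%nat). lia.
      eapply Rle_trans. eapply expand; eauto.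
      rewrite !iter_shift.
      destruct (H N ltac:(lia)) as [j [Hj [Hp Hq]]].
      pose proof HA as [HS _]. destruct (HS j Hj) as [_ [_ [Hmap _]]].
      pose proof (Hmap _ Hp). pose proof (Hmap _ Hq).
      rewrite <- !iter_shift. simpl. destruct Hcf as [_ [Hc0 [Hd1 _]]]. unfold Lset in *.
      apply Rabs_le; lra.
    + apply IH. intros n Hn. rewrite <- !iter_shift. apply H. lia.
Qed.

Lemma exp_pow x n : exp x ^ n = exp (INR n * x).
Proof. induction n as [|n IH]. simpl. rewrite Rmult_0_l, exp_0; auto.
  rewrite S_INR. simpl. rewrite IH, <- exp_plus. f_equal. ring. Qed.

Lemma rpow_small (r alpha K : R) (N : nat) : 0 < alpha -> 0 < K -> 0 < r ->
  r * exp (INR (Datatypes.S N) * K) <= 1 ->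
  Rpower r alpha <= (exp (- (alpha * K / 2)) ^ N) ^ 2 /\ (exp (- (alpha * K / 2)) ^ N) ^ 2 <= exp (- (alpha * K / 2)) ^ N.
Proof.
  intros Ha HK Hr H.
  assert (Ht : 0 < exp (- (alpha * K / 2)) ^ N) by (apply pow_lt; apply exp_pos).
  assert (Ht1 : exp (- (alpha * K / 2)) ^ N <= 1).
  { rewrite exp_pow. rewrite <- exp_0. apply exp_le. pose proof (pos_INR N). assert (0 <= INR N * (alpha * K)) by (apply Rmult_le_pos; nra). lra. }
  split; [|set (T := exp (- (alpha * K / 2)) ^ N) in *; simpl; nra].
  rewrite <- pow_mult, exp_pow. unfold Rpower. apply exp_le.
  assert (Hl : ln r <= - (INR (Datatypes.S N) * K)).
  { rewrite <- (ln_exp (- (INR (Datatypes.S N) * K))). apply ln_le; auto.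
    rewrite exp_Ropp. apply Rmult_le_reg_r with (exp (INR (Datatypes.S N) * K)). apply exp_pos.
    rewrite Rinv_l. lra. pose proof (exp_pos (INR (Datatypes.S N) * K)); lra. }
  rewrite S_INR in Hl. rewrite mult_INR. simpl (INR 2). pose proof (pos_INR N). nra.
Qed.

Lemma HA_M k a b c d M eps alpha s sd g :
  interval_config k a b c d -> in_class_A k a b c d M eps alpha s sd -> gapb k a b g ->
  0 < alpha -> 0 < M ->
  forall p q N, SB k a b p q -> Rabs (p - q) * exp (INR (Datatypes.S N) * (kap c d g / 2)) <= 1 ->
     Rabs (ln (Rabs (sd p)) - ln (Rabs (sd q))) <= M * exp (- (alpha * (kap c d g / 2) / 2)) ^ N.
Proof.
  intros Hcf HA Hg Ha HM p q N Hpq Hr.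
  pose proof (kap_pos _ _ _ _ _ _ Hcf Hg) as Hk.
  assert (0 < exp (- (alpha * (kap c d g / 2) / 2)) ^ N) by (apply pow_lt; apply exp_pos).
  destruct (Req_dec p q) as [->|Hne].
  - rewrite Rminus_diag, Rabs_R0. nra.
  - destruct (rpow_small (Rabs (p - q)) alpha (kap c d g / 2) N Ha ltac:(lra)) as [H1 H2]; auto.
    apply Rabs_pos_lt; lra.
    destruct (term_bounds _ _ _ _ _ _ _ _ _ _ HA p q Hpq) as [_ H3]. nra.
Qed.

Lemma HA_eps k a b c d M eps alpha s sd g :
  interval_config k a b c d -> in_class_A k a b c d M eps alpha s sd -> gapb k a b g ->
  0 < alpha -> 0 < M -> 0 < eps ->
  forall p q N, SB k a b p q -> Rabs (p - q) * exp (INR (Datatypes.S N) * (kap c d g / 2)) <= 1 ->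
     Rabs (ln (Rabs (sd p)) - ln (Rabs (sd q))) <= sqrt (eps * M) * exp (- (alpha * (kap c d g / 2) / 2)) ^ N.
Proof.
  intros Hcf HA Hg Ha HM He p q N Hpq Hr.
  pose proof (kap_pos _ _ _ _ _ _ Hcf Hg) as Hk.
  set (T := exp (- (alpha * (kap c d g / 2) / 2)) ^ N).
  assert (HT : 0 < T) by (apply pow_lt; apply exp_pos).
  assert (Hs : 0 <= sqrt (eps * M)) by apply sqrt_pos.
  assert (Hs2 : sqrt (eps * M) * sqrt (eps * M) = eps * M) by (apply sqrt_sqrt; nra).
  destruct (Req_dec p q) as [->|Hne].
  - rewrite Rminus_diag, Rabs_R0. nra.
  - destruct (rpow_small (Rabs (p - q)) alpha (kap c d g / 2) N Ha ltac:(lra)) as [H1 H2]; auto.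
    apply Rabs_pos_lt; lra.
    destruct (term_bounds _ _ _ _ _ _ _ _ _ _ HA p q Hpq) as [H3 H4]. fold T in H1, H2.
    set (tt := Rabs (ln (Rabs (sd p)) - ln (Rabs (sd q)))) in *.
    assert (0 <= tt) by apply Rabs_pos.
    assert (tt <= M * T ^ 2) by nra.
    assert (tt * tt <= eps * (M * T ^ 2)) by nra.
    destruct (Rle_dec tt (sqrt (eps * M) * T)) as [|Hn]; auto.
    exfalso. apply Rnot_le_lt in Hn.
    assert (sqrt (eps * M) * T * (sqrt (eps * M) * T) < tt * tt).
    { assert (0 <= sqrt (eps * M) * T) by nra. nra. }
    assert (sqrt (eps * M) * T * (sqrt (eps * M) * T) = eps * M * (T * T)).
    { transitivity ((sqrt (eps * M) * sqrt (eps * M)) * (T * T)). ring. rewrite Hs2. ring. }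
    simpl in *. nra.
Qed.


Lemma iter_deriv k a b c d M eps alpha s sd g :
  interval_config k a b c d -> in_class_A k a b c d M eps alpha s sd -> gapb k a b g ->
  forall N (A : R -> Prop) h hd, (forall x, A x -> has_deriv_within A h x (hd x)) ->
  (forall n x, (n < N)%nat -> A x -> Iset k a b (iterR n s (h x))) ->
  forall x, A x -> has_deriv_within A (fun y => iterR N s (h y)) x (dS s sd N (h x) * hd x).
Proof.
  intros Hcf HA Hg N. induction N as [|N IH]; intros A h hd Hh HI x Ax.
  - simpl. rewrite Rmult_1_l. auto.
  - apply hdw_ext with (fun y => iterR N s (s (h y))).
    { intros y _. rewrite iter_shift. auto. } auto.
    replace (dS s sd (Datatypes.S N) (h x) * hd x) with (dS s sd N (s (h x)) * (sd (h x) * hd x)) by (simpl; ring).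
    apply (IH A (fun y => s (h y)) (fun y => sd (h y) * hd y)); auto.
    + intros y Ay. apply hdw_chain with (Iset k a b); auto.
      * eapply S_deriv_I; eauto. apply (HI 0%nat y); auto. lia.
      * intros z Az. apply (HI 0%nat z); auto. lia.
    + intros n y Hn Ay. rewrite <- iter_shift. apply HI; auto. lia.
Qed.

Lemma phiset_app a b s w v X x : phiset a b s (w ++ v) X x <-> phiset a b s w (phiset a b s v X) x.
Proof.
  revert x. induction w as [|i w IH]; intros x; simpl. tauto.
  rewrite IH. tauto.
Qed.

Lemma phiset_mono a b s w (X Y : R -> Prop) x : (forall y, X y -> Y y) ->
  phiset a b s w X x -> phiset a b s w Y x.
Proof.
  revert x. induction w as [|i w IH]; intros x H; simpl. auto.
  intros [H1 H2]. split; auto.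
Qed.

Lemma phiset_info k a b s w X x : valid_word k w -> phiset a b s w X x ->
  (forall n, (n < length w)%nat -> (1 <= nth n w 0 <= k)%nat /\ Ival a b (nth n w 0%nat) (iterR n s x)) /\
  X (iterR (length w) s x).
Proof.
  revert x. induction w as [|i w IH]; intros x Hv H; cbn [length nth phiset] in *.
  - split; auto. intros n Hn; lia.
  - inversion Hv as [|i' w' Hi Hw]; subst. destruct H as [H1 H2]. destruct (IH (s x) Hw H2) as [IH1 IH2].
    split.
    + intros [|n] Hn; cbn [nth]. split; auto. rewrite iter_shift. apply IH1. lia.
    + rewrite iter_shift. auto.
Qed.

Lemma phiset_L k a b c d s w (X : R -> Prop) x : interval_config k a b c d -> valid_word k w ->
  (forall y, X y -> Lset c d y) -> phiset a b s w X x -> Lset c d x.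
Proof.
  intros Hcf Hv HX. destruct w as [|i w]; simpl. auto.
  intros [H1 _]. inversion Hv as [|i' w' Hi Hw]; subst. eapply Ival_L; eauto.
Qed.

Lemma phiset_surj k a b c d M eps alpha s sd w (X : R -> Prop) :
  interval_config k a b c d -> in_class_A k a b c d M eps alpha s sd -> valid_word k w ->
  (forall y, X y -> Lset c d y) -> forall y, X y ->
  exists x, phiset a b s w X x /\ iterR (length w) s x = y.
Proof.
  intros Hcf HA. induction w as [|i w IH]; intros Hv HX y Hy; cbn [length phiset].
  - exists y; auto.
  - inversion Hv as [|i' w' Hi Hw]; subst. destruct (IH Hw HX y Hy) as [x' [Hx' Ex']].
    pose proof HA as [HS _]. destruct (HS i Hi) as [_ [_ [_ [Hsurj _]]]].
    destruct (Hsurj x' (phiset_L _ _ _ _ _ _ _ _ _ Hcf Hw HX Hx')) as [x [Hx Ex]].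
    exists x. split. split; auto. rewrite Ex; auto. rewrite iter_shift, Ex. auto.
Qed.

Lemma convex_minmax (A : R -> Prop) p q r : convex A -> A p -> A q ->
  Rmin p q <= r <= Rmax p q -> A r.
Proof.
  intros Hc Hp Hq. unfold Rmin, Rmax. destruct Rle_dec; intros Hr.
  apply (Hc p q r); auto. apply (Hc q p r); auto; lra.
Qed.

Lemma no_peak (A : R -> Prop) h x y z : convex A -> (forall t, A t -> cont_within A h t) ->
  (forall p q, A p -> A q -> h p = h q -> p = q) -> A x -> A y -> x <= z <= y ->
  h x < h z -> h y < h z -> False.
Proof.
  intros Hc Hcont Hinj Hx Hy Hz H1 H2.
  assert (HzA : A z) by (apply (Hc x y z); auto).
  set (v := (Rmax (h x) (h y) + h z) / 2).
  assert (Hv1 : h x < v < h z) by (unfold v, Rmax; destruct Rle_dec; lra).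
  assert (Hv2 : h y < v < h z) by (unfold v, Rmax; destruct Rle_dec; lra).
  destruct (IVT_within A h x z v Hc Hx HzA Hcont) as [z1 [Hz1 [A1 E1]]].
  { unfold Rmin, Rmax; destruct Rle_dec; lra. }
  destruct (IVT_within A h z y v Hc HzA Hy Hcont) as [z2 [Hz2 [A2 E2]]].
  { unfold Rmin, Rmax; destruct Rle_dec; lra. }
  assert (z1 = z2) by (apply Hinj; congruence). subst z2.
  unfold Rmin, Rmax in Hz1, Hz2. repeat destruct Rle_dec; try lra.
  assert (z1 = z) by lra. subst z1. lra.
Qed.

Lemma cont_within_opp A h t : cont_within A h t -> cont_within A (fun x => - h x) t.
Proof.
  intros H e He. destruct (H e He) as [del [Hd Hy]]. exists del; split; auto.
  intros y Ay Hyt. replace (- h y - - h t) with (- (h y - h t)) by ring. rewrite Rabs_Ropp. auto.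
Qed.

Lemma between_gen (A : R -> Prop) h x y z : convex A -> (forall t, A t -> cont_within A h t) ->
  (forall p q, A p -> A q -> h p = h q -> p = q) -> A x -> A y -> x <= z <= y ->
  Rmin (h x) (h y) <= h z <= Rmax (h x) (h y).
Proof.
  intros Hc Hcont Hinj Hx Hy Hz.
  destruct (Rle_dec (h z) (Rmax (h x) (h y))) as [H1|H1];
  destruct (Rle_dec (Rmin (h x) (h y)) (h z)) as [H2|H2]; auto; exfalso.
  - apply Rnot_le_lt in H2. apply (no_peak A (fun t => - h t) x y z); auto.
    + intros t At. apply cont_within_opp; auto.
    + intros p q Hp Hq E. apply Hinj; auto. lra.
    + unfold Rmin in H2; destruct Rle_dec; lra.
    + unfold Rmin in H2; destruct Rle_dec; lra.
  - apply Rnot_le_lt in H1. apply (no_peak A h x y z); auto.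
    + unfold Rmax in H1; destruct Rle_dec; lra.
    + unfold Rmax in H1; destruct Rle_dec; lra.
  - apply Rnot_le_lt in H1. apply Rnot_le_lt in H2.
    pose proof (Rmin_l (h x) (h y)). pose proof (Rmax_l (h x) (h y)). lra.
Qed.

Lemma s_between k a b c d M eps alpha s sd g :
  interval_config k a b c d -> in_class_A k a b c d M eps alpha s sd -> gapb k a b g ->
  eps <= kap c d g / 2 ->
  forall j x y z, (1 <= j <= k)%nat -> Ival a b j x -> Ival a b j y -> x <= z <= y ->
  Rmin (s x) (s y) <= s z <= Rmax (s x) (s y).
Proof.
  intros Hcf HA Hg Heps j x y z Hj Hx Hy Hz.
  pose proof HA as [HS _]. destruct (HS j Hj) as [Hder _].
  pose proof (kap_pos _ _ _ _ _ _ Hcf Hg).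
  apply (between_gen (Ival a b j)); auto. apply Ival_convex.
  - intros t Ht. eapply hdw_cont. apply Hder; auto.
  - intros p q Hp Hq E. pose proof (expand_step _ _ _ _ _ _ _ _ _ _ _ Hcf HA Hg Heps p q
      ltac:(exists j; auto)) as H1. rewrite E, Rminus_diag, Rabs_R0 in H1.
    pose proof (exp_pos (kap c d g / 2)). pose proof (Rabs_pos (p - q)).
    assert (HH : Rabs (p - q) = 0) by nra. destruct (Req_dec p q) as [|Hne]; auto. exfalso. assert (Hpq : p - q <> 0) by lra. pose proof (Rabs_pos_lt _ Hpq). lra.
Qed.

Lemma phiset_convex k a b c d M eps alpha s sd g w (X : R -> Prop) :
  interval_config k a b c d -> in_class_A k a b c d M eps alpha s sd -> gapb k a b g ->
  eps <= kap c d g / 2 -> valid_word k w -> convex X -> convex (phiset a b s w X).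
Proof.
  intros Hcf HA Hg Heps. induction w as [|i w IH]; intros Hv HX; simpl. auto.
  inversion Hv as [|i' w' Hi Hw]; subst.
  intros x y z [Hx1 Hx2] [Hy1 Hy2] Hz. split.
  - apply (Ival_convex a b i x y z); auto.
  - apply (convex_minmax _ (s x) (s y)); auto. eapply s_between; eauto.
Qed.

Lemma SB_of_cont k a b c d g (A : R -> Prop) h x y :
  interval_config k a b c d -> gapb k a b g -> convex A -> A x -> A y ->
  (forall t, A t -> cont_within A h t) -> (forall t, A t -> Iset k a b (h t)) ->
  SB k a b (h x) (h y).
Proof.
  intros Hcf Hg Hc Ax Ay Hcont HI.
  destruct (HI x Ax) as [i [Hi Hxi]]. destruct (HI y Ay) as [j [Hj Hyj]].
  pose proof Hcf as [Hk [_ [_ [_ [_ [Hab Hba]]]]]].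
  assert (Hgen : forall p q i j, A p -> A q -> (1 <= i)%nat -> (i < j)%nat -> (j <= k)%nat ->
     Ival a b i (h p) -> Ival a b j (h q) -> False).
  { clear i j Hi Hj Hxi Hyj. intros p q i j Ap Aq Hi Hij Hjk Hp Hq.
    set (v := (b i + a (i + 1)%nat) / 2).
    assert (Hba' := Hba i ltac:(lia)).
    assert (a (i + 1)%nat <= a j).
    { destruct (Nat.eq_dec j (i+1)) as [->|Hne]. lra.
      pose proof (ord_gap _ _ _ _ _ _ Hcf Hg (i+1) j ltac:(lia) ltac:(lia) Hjk).
      pose proof (Hab (i+1)%nat ltac:(lia)). destruct Hg; lra. }
    unfold Ival in *.
    destruct (IVT_within A h p q v Hc Ap Aq Hcont) as [z [_ [Az Ez]]].
    { unfold v, Rmin, Rmax; destruct Rle_dec; lra. }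
    apply (Jgap_notI k a b c d i v Hcf ltac:(lia)).
    unfold Jgap, v; lra. rewrite <- Ez. auto. }
  destruct (Nat.lt_total i j) as [H|[H|H]].
  - exfalso. apply (Hgen x y i j); auto; lia.
  - subst. exists j; auto.
  - exfalso. apply (Hgen y x j i); auto; lia.
Qed.


Lemma nat_unbounded r : exists n : nat, r < INR n.
Proof.
  destruct (archimed r) as [H1 _].
  destruct (Z_lt_le_dec (up r) 0) as [Hn|Hp].
  - exists 0%nat. simpl. apply IZR_lt in Hn. lra.
  - exists (Z.to_nat (up r)). rewrite INR_IZR_INZ, Z2Nat.id by lia. auto.
Qed.

Lemma cont_within_of_pt A f x : continuity_pt f x -> cont_within A f x.
Proof.
  intros H e He. unfold continuity_pt, continue_in, limit1_in, limit_in in H. simpl in H.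
  destruct (H e He) as [del [Hd Hy]]. exists del; split; auto.
  intros y _ Hyx. unfold R_dist in Hy. destruct (Req_dec y x) as [->|Hne].
  rewrite Rminus_diag, Rabs_R0; auto. apply Hy. split; [split; [exact I| auto]| auto].
Qed.

Lemma frac_of z f0 : 0 <= f0 < 1 -> frac_part (IZR z + f0) = f0.
Proof. intros H. destruct (Int_part_frac_part_spec (IZR z + f0) z f0 H eq_refl) as [_ E]. auto. Qed.

Lemma frac_const (A : R -> Prop) F (d : R) : convex A -> continuity F -> 0 <= d < 1 ->
  (forall x, A x -> frac_part (F x) <= d) ->
  forall x y, A x -> A y -> Int_part (F x) = Int_part (F y).
Proof.
  intros Hc HF Hd Hfr.
  assert (Hgen : forall x y, A x -> A y -> (Int_part (F x) < Int_part (F y))%Z -> False).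
  { intros x y Ax Ay Hlt.
    set (N := (Int_part (F x) + 1)%Z).
    assert (HxN : F x <= IZR N - 1 + d).
    { pose proof (Hfr x Ax). unfold frac_part in H. unfold N. rewrite plus_IZR. lra. }
    assert (HyN : IZR N <= F y).
    { pose proof (base_Int_part (F y)) as [H _]. assert (Hz : (N <= Int_part (F y))%Z) by (unfold N; lia).
      apply IZR_le in Hz. lra. }
    set (v := IZR N - (1 - d) / 2).
    destruct (IVT_within A F x y v Hc Ax Ay) as [z [_ [Az Ez]]].
    { intros t _. apply cont_within_of_pt. apply HF. }
    { unfold v, Rmin, Rmax; destruct Rle_dec; lra. }
    pose proof (Hfr z Az) as Hz. rewrite Ez in Hz.
    replace v with (IZR (N - 1) + (1 + d) / 2) in Hz by (unfold v; rewrite minus_IZR; field).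
    rewrite frac_of in Hz by lra. lra. }
  intros x y Ax Ay. destruct (Z.lt_total (Int_part (F x)) (Int_part (F y))) as [H|[H|H]]; auto.
  - exfalso; apply (Hgen x y); auto.
  - exfalso; apply (Hgen y x); auto.
Qed.

Lemma hdw_minus_const D F Fd x C : derivable_pt_lim F x (Fd x) ->
  has_deriv_within D (fun y => F y - C) x (Fd x).
Proof.
  intros H. apply hdw_of_lim. replace (Fd x) with (Fd x - 0) by ring.
  apply (derivable_pt_lim_minus F (fct_cte C)); auto. apply derivable_pt_lim_const.
Qed.

Lemma uc_lnFd Fd e : continuity Fd -> (forall x, Fd x <> 0) -> 0 < e ->
  exists del, 0 < del /\ forall x y, 0 <= x <= 1 -> 0 <= y <= 1 -> Rabs (x - y) < del ->
    Rabs (ln (Rabs (Fd x)) - ln (Rabs (Fd y))) < e.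
Proof.
  intros Hc Hnz He.
  assert (Hu : uniform_continuity (fun x => ln (Rabs (Fd x))) (fun x => 0 <= x <= 1)).
  { apply Heine. apply compact_P3. intros x _.
    apply (continuity_pt_comp (fun x => Rabs (Fd x)) ln).
    - apply (continuity_pt_comp Fd Rabs). apply Hc. apply Rcontinuity_abs.
    - apply derivable_continuous_pt. exists (/ Rabs (Fd x)). apply derivable_pt_lim_ln.
      apply Rabs_pos_lt; auto. }
  destruct (Hu (mkposreal e He)) as [del Hd]. exists del. split. apply cond_pos.
  intros x y Hx Hy Hxy. apply (Hd x y Hx Hy Hxy).
Qed.


Definition thet alpha c d g := exp (- (alpha * (kap c d g / 2) / 2)).

Lemma thet_bounds alpha c d g : 0 < alpha -> 0 < kap c d g -> 0 < thet alpha c d g < 1.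
Proof.
  intros Ha Hk. unfold thet. split. apply exp_pos. rewrite <- exp_0. apply exp_increasing.
  assert (0 < alpha * kap c d g) by nra. lra.
Qed.

Lemma Lset_convex c d : convex (Lset c d).
Proof. intros x y z Hx Hy Hz. unfold Lset in *. lra. Qed.

Lemma T_diam k a b c d M eps alpha s sd g w x y :
  interval_config k a b c d -> in_class_A k a b c d M eps alpha s sd -> gapb k a b g ->
  eps <= kap c d g / 2 -> valid_word k w -> (1 <= length w)%nat ->
  phiset a b s w (Lset c d) x -> phiset a b s w (Lset c d) y ->
  Rabs (x - y) * exp (INR (length w) * (kap c d g / 2)) <= 1.
Proof.
  intros Hcf HA Hg Heps Hv Hw Hx Hy.
  destruct (phiset_info _ _ _ _ _ _ _ Hv Hx) as [Ix Lx].
  destruct (phiset_info _ _ _ _ _ _ _ Hv Hy) as [Iy Ly].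
  eapply Rle_trans. eapply expand; eauto.
  { intros n Hn. destruct (Ix n Hn) as [H1 H2]. destruct (Iy n Hn) as [_ H3].
    exists (nth n w 0%nat); auto. }
  pose proof Hcf as [_ [Hc0 [Hd1 _]]]. unfold Lset in *. apply Rabs_le; lra.
Qed.

Lemma core k a b c d M eps alpha eta s sd g F Fd del w u :
  interval_config k a b c d -> in_class_A k a b c d M eps alpha s sd -> gapb k a b g ->
  0 < alpha -> 0 < M -> 0 < eps ->
  eps <= kap c d g / 2 -> sqrt (eps * M) * / (1 - thet alpha c d g) <= eta / 2 ->
  circle_diffeo_lift F Fd ->
  (forall x y, 0 <= x <= 1 -> 0 <= y <= 1 -> Rabs (x - y) < del ->
    Rabs (ln (Rabs (Fd x)) - ln (Rabs (Fd y))) < eta / 4) ->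
  1 < del * exp (INR (length w) * (kap c d g / 2)) ->
  valid_word k w -> (1 <= length w)%nat ->
  uT_cond k a b s (circ_map F) (phiset a b s w (Lset c d)) u ->
  exists gd, (forall x, phiset a b s w (Lset c d) x ->
     has_deriv_within (phiset a b s w (Lset c d)) (gT s (circ_map F) u) x (gd x) /\ gd x <> 0) /\
   (forall x y, phiset a b s w (Lset c d) x -> phiset a b s w (Lset c d) y ->
     ln (Rabs (gd x) / Rabs (gd y)) <= 3 * eta / 4).
Proof.
  intros Hcf HA Hg Ha HM He Heps1 Heps2 Hlift Hdel Hm Hv Hw [Hu1 Hu].
  set (T := phiset a b s w (Lset c d)).
  pose proof (kap_pos _ _ _ _ _ _ Hcf Hg) as Hk.
  pose proof (thet_bounds alpha c d g Ha Hk) as Hth.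
  assert (Tc : convex T) by (eapply phiset_convex; eauto; apply Lset_convex).
  pose proof Hcf as [Hk2 [Hc0 [Hd1 [Hca [Hbd [Hab Hba]]]]]].
  assert (HcdL : c <= d) by (pose proof (Hab 1%nat ltac:(lia)); pose proof (b_le_d _ _ _ _ _ Hcf 1 ltac:(lia)); lra).
  assert (TL : forall x, T x -> Lset c d x) by (intros x; apply (phiset_L k a b c d s w); auto).
  destruct (phiset_surj k a b c d M eps alpha s sd w (Lset c d) Hcf HA Hv ltac:(auto) c
    ltac:(unfold Lset; lra)) as [x0 [Tx0 _]].
  destruct Hlift as [HFd [HFc [HFnz _]]].
  assert (HFcont : continuity F) by (intros x; apply derivable_continuous_pt; exists (Fd x); apply HFd).
  assert (Hfr : forall x, T x -> frac_part (F x) <= d).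
  { intros x Tx. pose proof (Hu x Tx 0%nat ltac:(lia)) as H. simpl in H.
    pose proof (Iset_L _ _ _ _ _ _ Hcf H). unfold circ_map, Lset in *. lra. }
  set (n0 := Int_part (F x0)).
  set (f0 := fun y => F y - IZR n0).
  assert (Ef : forall x, T x -> circ_map F x = f0 x).
  { intros x Tx. unfold circ_map, f0, frac_part, n0. f_equal. f_equal.
    apply (frac_const T F d); auto. lra. }
  assert (HI : forall n x, (n < u)%nat -> T x -> Iset k a b (iterR n s (f0 x))).
  { intros n x Hn Tx. rewrite <- Ef by auto. apply Hu; auto. lia. }
  assert (Hf0 : forall x, T x -> has_deriv_within T f0 x (Fd x)).
  { intros x Tx. apply hdw_minus_const. apply HFd. }
  assert (Hder : forall N, (N <= u)%nat -> forall x, T x ->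
     has_deriv_within T (fun y => iterR N s (f0 y)) x (dS s sd N (f0 x) * Fd x)).
  { intros N HN. eapply iter_deriv; eauto. intros n x Hn Tx. apply HI; auto. lia. }
  assert (Hsdnz : forall x, Iset k a b x -> sd x <> 0).
  { intros x [j [Hj Hx]]. pose proof HA as [HS _]. destruct (HS j Hj) as [_ [_ [_ [_ Hgt]]]].
    pose proof (Hgt x Hx). intros E. rewrite E, Rabs_R0 in H. lra. }
  assert (HdS : forall x, T x -> dS s sd u (f0 x) <> 0 /\ ln (Rabs (dS s sd u (f0 x))) = lsum s sd u (f0 x)).
  { intros x Tx. apply dS_ln. intros n Hn. apply Hsdnz. apply HI; auto. }
  exists (fun x => dS s sd u (f0 x) * Fd x). split.
  - intros x Tx. split.
    + apply hdw_ext with (fun y => iterR u s (f0 y)); auto.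
      intros y Ty. unfold gT. rewrite Ef; auto.
    + apply Rmult_integral_contrapositive. split. apply HdS; auto. apply HFnz.
  - intros x y Tx Ty.
    destruct (HdS x Tx) as [Hx1 Hx2]. destruct (HdS y Ty) as [Hy1 Hy2].
    assert (Ax : 0 < Rabs (dS s sd u (f0 x))) by (apply Rabs_pos_lt; auto).
    assert (Ay : 0 < Rabs (dS s sd u (f0 y))) by (apply Rabs_pos_lt; auto).
    assert (Bx : 0 < Rabs (Fd x)) by (apply Rabs_pos_lt; auto).
    assert (By : 0 < Rabs (Fd y)) by (apply Rabs_pos_lt; auto).
    rewrite !Rabs_mult, ln_div, !ln_mult, Hx2, Hy2 by (try apply Rmult_lt_0_compat; auto).
    assert (H1 : Rabs (lsum s sd u (f0 x) - lsum s sd u (f0 y)) <= eta / 2).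
    { eapply Rle_trans. apply (dist_sum k a b c d M eps alpha s sd g (sqrt (eps * M)) (thet alpha c d g)); auto.
      - intros p q N Hpq Hr. unfold thet. eapply HA_eps; eauto.
      - intros n Hn. apply (SB_of_cont k a b c d g T (fun t => iterR n s (f0 t))); auto.
        + intros t Tt. eapply hdw_cont. apply Hder; auto. lia.
      - eapply Rle_trans; [| apply Heps2]. apply Rmult_le_compat_l. apply sqrt_pos.
        apply geo_bound. unfold thet in *. lra. }
    assert (H2 : Rabs (ln (Rabs (Fd x)) - ln (Rabs (Fd y))) < eta / 4).
    { apply Hdel. pose proof (TL x Tx). unfold Lset in *. lra. pose proof (TL y Ty). unfold Lset in *. lra.
      pose proof (T_diam _ _ _ _ _ _ _ _ _ _ _ _ _ _ Hcf HA Hg Heps1 Hv Hw Tx Ty).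
      pose proof (exp_pos (INR (length w) * (kap c d g / 2))).
      assert (Hdp : 0 < del).
      { destruct (Rle_dec del 0); [|lra]. nra. }
      nra. }
    assert (Hq := Rabs_def2 _ _ H2). unfold Rabs in H1; destruct Rcase_abs in H1; lra.
Qed.


Theorem mainTheorem5 (k : nat) (a b : nat -> R) (c d : R)
  (Hcfg : interval_config k a b c d)
  (alpha M eta : R) (Halpha : 0 < alpha) (HM : 0 < M) (Heta : 0 < eta < 1 / 2) :
  exists eps, 0 < eps /\ exists l : nat,
    forall S Sd : R -> R, in_class_A k a b c d M eps alpha S Sd ->
    forall F Fd : R -> R, circle_diffeo_lift F Fd ->
    minimal_set (circ_map F) (C_S k a b S) ->
    exists m0 : nat,
      (forall w, valid_word k w -> (m0 < length w)%nat ->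
         forall u, is_uT k a b S (circ_map F) (phiset a b S w (Lset c d)) u ->
         N_map_lt (phiset a b S w (Lset c d)) (gT S (circ_map F) u) eta) /\
      (forall w, valid_word k w -> (m0 < length w)%nat ->
         forall u, is_uT k a b S (circ_map F) (phiset a b S w (Lset c d)) u ->
         forall (i j : nat) (v : list nat),
           (1 <= i <= k - 1)%nat -> (1 <= j <= k - 1)%nat -> valid_word k v ->
           maps_onto (gT S (circ_map F) u) (phiset a b S (w ++ v) (Jgap a b i)) (Jgap a b j) ->
           (length v <= l)%nat).
Proof.
  destruct (gap_exists _ _ _ _ _ Hcfg) as [g Hg].
  pose proof (kap_pos _ _ _ _ _ _ Hcfg Hg) as Hk.
  pose proof (thet_bounds alpha c d g Halpha Hk) as Hth.
  set (kp := kap c d g) in *. set (th := thet alpha c d g) in *.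
  set (eps := Rmin (kp / 2) (((eta / 2) * (1 - th)) ^ 2 / M)).
  assert (Heps0 : 0 < eps).
  { apply Rmin_pos. lra. apply Rdiv_lt_0_compat; auto. apply pow_lt. nra. }
  assert (Heps1 : eps <= kp / 2) by apply Rmin_l.
  assert (Heps2 : sqrt (eps * M) * / (1 - th) <= eta / 2).
  { assert (H1 : eps * M <= ((eta / 2) * (1 - th)) ^ 2).
    { assert (eps <= ((eta / 2) * (1 - th)) ^ 2 / M) by apply Rmin_r.
      apply Rmult_le_compat_r with (r := M) in H; [|lra].
      unfold Rdiv in H. rewrite Rmult_assoc, Rinv_l in H by lra. lra. }
    apply sqrt_le_1_alt in H1. rewrite sqrt_pow2 in H1 by nra.
    apply Rmult_le_reg_r with (1 - th). lra. rewrite Rmult_assoc, Rinv_l by lra. lra. }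
  set (DD := M * / (1 - th)).
  set (Kc := 2 * exp (3 * eta / 4) * exp DD / g).
  destruct (nat_unbounded (ln Kc / (kp / 2))) as [l Hl].
  exists eps. split; auto. exists l.
  intros S Sd HA F Fd Hlift _.
  pose proof Hlift as [_ [HFc [HFnz _]]].
  destruct (uc_lnFd Fd (eta / 4) HFc HFnz ltac:(lra)) as [del [Hdel Hdel2]].
  destruct (nat_unbounded (ln (/ del) / (kp / 2))) as [m0 Hm0].
  assert (Hmgood : forall w : list nat, (m0 < length w)%nat -> 1 < del * exp (INR (length w) * (kp / 2))).
  { intros w Hw. apply lt_INR in Hw.
    assert (ln (/ del) < INR (length w) * (kp / 2)).
    { apply Rmult_lt_compat_r with (r := kp / 2) in Hm0; [|lra].
      unfold Rdiv at 1 in Hm0. rewrite Rmult_assoc, Rinv_l in Hm0 by lra. nra. }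
    apply exp_increasing in H. rewrite exp_ln in H by (apply Rinv_0_lt_compat; auto).
    apply Rmult_lt_compat_l with (r := del) in H; auto. rewrite Rinv_r in H by lra. lra. }
  exists m0. split.
  - intros w Hv Hm u [Hu _].
    destruct (core k a b c d M eps alpha eta S Sd g F Fd del w u Hcfg HA Hg Halpha HM Heps0 Heps1
       Heps2 Hlift Hdel2 (Hmgood w Hm) Hv ltac:(lia) Hu) as [gd [H1 H2]].
    exists gd. split. intros x Tx; apply H1; auto.
    exists (3 * eta / 4). split. lra. auto.
  - intros w Hv Hm u [Hu _] i j v Hi Hj Hvv [_ Hons].
    destruct (core k a b c d M eps alpha eta S Sd g F Fd del w u Hcfg HA Hg Halpha HM Heps0 Heps1
       Heps2 Hlift Hdel2 (Hmgood w Hm) Hv ltac:(lia) Hu) as [gd [Hgd1 Hgd2]].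
    set (T := phiset a b S w (Lset c d)) in *.
    destruct (Compare_dec.le_lt_dec (length v) l) as [Hle|Hlt]; auto. exfalso.
    pose proof Hcfg as [Hk2 [Hc0 [Hd1 [Hca [Hbd [Hab Hba]]]]]].
    assert (HcdL : c < d) by (pose proof (Hab 1%nat ltac:(lia)); pose proof (b_le_d _ _ _ _ _ Hcfg 1 ltac:(lia)); lra).
    assert (Tc : convex T) by (eapply phiset_convex; eauto; apply Lset_convex).
    assert (HJL : forall y, Jgap a b i y -> Lset c d y) by (intros y; apply (Jgap_L k a b c d i y Hcfg Hi)).
    set (h := a (j + 1)%nat - b j). assert (Eh : h = a (j + 1)%nat - b j) by reflexivity. clearbody h.
    assert (Hh : g <= h) by (destruct Hg as [_ Hg']; specialize (Hg' j ltac:(lia)); lra).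
    assert (Hg0 : 0 < g) by (destruct Hg; auto).
    destruct (Hons (b j + h / 4)) as [x1 [G1 E1]]. { unfold Jgap. lra. }
    destruct (Hons (b j + 3 * h / 4)) as [x2 [G2 E2]]. { unfold Jgap. lra. }
    apply phiset_app in G1. apply phiset_app in G2.
    destruct (phiset_info k a b S w _ x1 Hv G1) as [I1 Z1].
    destruct (phiset_info k a b S w _ x2 Hv G2) as [I2 Z2].
    assert (HvL : forall y, phiset a b S v (Jgap a b i) y -> Lset c d y).
    { intros y Hy. apply (phiset_L k a b c d S v (Jgap a b i)); auto. }
    assert (T1 : T x1) by (apply (phiset_mono a b S w (phiset a b S v (Jgap a b i))); auto).
    assert (T2 : T x2) by (apply (phiset_mono a b S w (phiset a b S v (Jgap a b i))); auto).
    set (z1 := iterR (length w) S x1) in *. set (z2 := iterR (length w) S x2) in *.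
    assert (Hz : Rabs (z1 - z2) * exp (INR (length v) * (kp / 2)) <= 1).
    { destruct (phiset_info k a b S v _ z1 Hvv Z1) as [J1 K1].
      destruct (phiset_info k a b S v _ z2 Hvv Z2) as [J2 K2].
      eapply Rle_trans. eapply expand; eauto.
      - intros n Hn. exists (nth n v 0%nat). destruct (J1 n Hn), (J2 n Hn); auto.
      - apply HJL in K1. apply HJL in K2. unfold Lset in *. apply Rabs_le; lra. }
    assert (HSm : forall x, T x -> has_deriv_within T (fun y => iterR (length w) S y) x (dS S Sd (length w) x * 1)).
    { intros x Tx. exact (iter_deriv k a b c d M eps alpha S Sd g Hcfg HA Hg (length w) T (fun y => y) (fun _ => 1)
        (fun y Ty => hdw_of_lim T (fun y => y) y 1 (derivable_pt_lim_id y))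
        (fun n y Hn Ty => match phiset_info k a b S w _ y Hv Ty with conj Iy _ =>
            match Iy n Hn with conj Ha Hb => ex_intro _ (nth n w 0%nat) (conj Ha Hb) end end) x Tx). }
    destruct (MVT_within T _ _ x1 x2 Tc T1 T2 HSm) as [zeta [_ [Tz Ez]]]. fold z1 z2 in Ez.
    destruct (phiset_surj k a b c d M eps alpha S Sd w (Lset c d) Hcfg HA Hv (fun y H => H) c
       ltac:(unfold Lset; lra)) as [t1 [Tt1 Et1]].
    destruct (phiset_surj k a b c d M eps alpha S Sd w (Lset c d) Hcfg HA Hv (fun y H => H) d
       ltac:(unfold Lset; lra)) as [t2 [Tt2 Et2]].
    destruct (MVT_within T _ _ t1 t2 Tc Tt1 Tt2 HSm) as [xi [_ [Txi Exi]]].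
    rewrite Et1, Et2 in Exi.
    assert (Hg' : forall x, T x -> has_deriv_within T (gT S (circ_map F) u) x (gd x)) by (intros; apply Hgd1; auto).
    destruct (MVT_within T _ _ x1 x2 Tc T1 T2 Hg') as [th1 [_ [Tth1 Eth1]]].
    rewrite E1, E2 in Eth1.
    destruct (MVT_within T _ _ t1 t2 Tc Tt1 Tt2 Hg') as [th2 [_ [Tth2 Eth2]]].
    assert (HgL : forall t, T t -> Lset c d (gT S (circ_map F) u t)).
    { intros t Tt. destruct Hu as [Hu1 Hu2]. destruct (Hu2 t Tt (u - 1)%nat ltac:(lia)) as [jj [Hjj Hx]].
      unfold gT. replace u with (Datatypes.S (u - 1)) by lia. simpl.
      pose proof HA as [HS _]. destruct (HS jj Hjj) as [_ [_ [Hmap _]]]. apply Hmap; auto. }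
    assert (HSd : forall x, T x -> dS S Sd (length w) x <> 0 /\ ln (Rabs (dS S Sd (length w) x)) = lsum S Sd (length w) x).
    { intros x Tx. apply dS_ln. intros n Hn. destruct (phiset_info k a b S w _ x Hv Tx) as [Ix _].
      destruct (Ix n Hn) as [Hjn Hxn]. pose proof HA as [HS _]. destruct (HS _ Hjn) as [_ [_ [_ [_ Hgt]]]].
      pose proof (Hgt _ Hxn). intros E. rewrite E, Rabs_R0 in H. lra. }
    assert (Hdist : Rabs (lsum S Sd (length w) xi - lsum S Sd (length w) zeta) <= DD).
    { eapply Rle_trans. apply (dist_sum k a b c d M eps alpha S Sd g M th); auto.
      - intros p q N Hpq Hr. unfold th, thet. eapply HA_M; eauto.
      - intros n Hn. destruct (phiset_info k a b S w _ xi Hv Txi) as [Ix _].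
        destruct (phiset_info k a b S w _ zeta Hv Tz) as [Iz _].
        exists (nth n w 0%nat). destruct (Ix n Hn), (Iz n Hn); auto.
      - apply Rmult_le_compat_l. lra. apply geo_bound. lra. }
    pose proof (Hgd2 th1 th2 Tth1 Tth2) as Hcd.
    destruct (HSd xi Txi) as [Nxi Lxi]. destruct (HSd zeta Tz) as [Nz Lz].
    destruct (Hgd1 th1 Tth1) as [_ Nth1]. destruct (Hgd1 th2 Tth2) as [_ Nth2].
    set (P1 := Rabs (dS S Sd (length w) zeta)) in *. set (P2 := Rabs (dS S Sd (length w) xi)) in *.
    set (Q1 := Rabs (gd th1)) in *. set (Q2 := Rabs (gd th2)) in *.
    set (X := Rabs (x2 - x1)). set (Y := Rabs (t2 - t1)).
    set (E := exp (INR (length v) * (kp / 2))) in *.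
    assert (P1p : 0 < P1) by (apply Rabs_pos_lt; auto).
    assert (P2p : 0 < P2) by (apply Rabs_pos_lt; auto).
    assert (Q1p : 0 < Q1) by (apply Rabs_pos_lt; auto).
    assert (Q2p : 0 < Q2) by (apply Rabs_pos_lt; auto).
    assert (Xp : 0 <= X) by apply Rabs_pos. assert (Yp : 0 <= Y) by apply Rabs_pos.
    assert (F1 : h / 2 = Q1 * X).
    { unfold Q1, X. rewrite <- Rabs_mult, <- Eth1. rewrite Rabs_right; lra. }
    assert (F2 : Rabs (z1 - z2) = P1 * X).
    { unfold P1, X. rewrite <- Rabs_mult, Rabs_minus_sym. rewrite Ez. f_equal. ring. }
    assert (F3 : d - c = P2 * Y).
    { unfold P2, Y. rewrite <- Rabs_mult. replace (dS S Sd (length w) xi * (t2 - t1)) with (d - c) by (rewrite Exi; ring).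
      rewrite Rabs_right; lra. }
    assert (F4 : Q2 * Y <= d - c).
    { unfold Q2, Y. rewrite <- Rabs_mult, <- Eth2. pose proof (HgL t1 Tt1). pose proof (HgL t2 Tt2).
      unfold Lset in *. apply Rabs_le; lra. }
    assert (F5 : Q1 <= exp (3 * eta / 4) * Q2).
    { rewrite ln_div in Hcd by auto.
      rewrite <- (exp_ln Q1), <- (exp_ln Q2) by auto. rewrite <- exp_plus. apply exp_le. lra. }
    assert (F6 : P2 <= exp DD * P1).
    { rewrite <- (exp_ln P1), <- (exp_ln P2) by auto. rewrite <- exp_plus. apply exp_le.
      rewrite Lxi, Lz. unfold Rabs in Hdist; destruct Rcase_abs in Hdist; lra. }
    assert (Ypos : 0 < Y) by (destruct Yp as [Yp|Yp]; auto; rewrite <- Yp in F3; lra).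
    assert (F7 : Q2 <= P2) by (apply Rmult_le_reg_r with Y; lra).
    assert (Ee1 : 0 < exp (3 * eta / 4)) by apply exp_pos.
    assert (Ee2 : 0 < exp DD) by apply exp_pos.
    assert (F8 : g / 2 <= exp (3 * eta / 4) * exp DD * (P1 * X)).
    { assert (Q1 * X <= exp (3 * eta / 4) * Q2 * X) by (apply Rmult_le_compat_r; auto).
      assert (exp (3 * eta / 4) * Q2 * X <= exp (3 * eta / 4) * P2 * X).
      { apply Rmult_le_compat_r; auto. apply Rmult_le_compat_l; lra. }
      assert (exp (3 * eta / 4) * P2 * X <= exp (3 * eta / 4) * (exp DD * P1) * X).
      { apply Rmult_le_compat_r; auto. apply Rmult_le_compat_l; lra. }
      assert (exp (3 * eta / 4) * (exp DD * P1) * X = exp (3 * eta / 4) * exp DD * (P1 * X)) by ring.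
      lra. }
    assert (HE : Kc < E).
    { apply lt_INR in Hlt.
      assert (Kcp : 0 < Kc) by (unfold Kc; apply Rdiv_lt_0_compat; auto; apply Rmult_lt_0_compat; lra).
      unfold E. rewrite <- (exp_ln Kc) by auto. apply exp_increasing.
      apply Rmult_lt_compat_r with (r := kp / 2) in Hl; [|lra].
      unfold Rdiv at 1 in Hl. rewrite Rmult_assoc, Rinv_l in Hl by lra.
      assert (INR l * (kp / 2) < INR (length v) * (kp / 2)) by (apply Rmult_lt_compat_r; lra). lra. }
    assert (HKc : g / 2 * Kc = exp (3 * eta / 4) * exp DD) by (unfold Kc; field; lra).
    rewrite F2 in Hz.
    assert (g / 2 * E <= exp (3 * eta / 4) * exp DD * (P1 * X * E)).
    { assert (0 < E) by (unfold E; apply exp_pos).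
      apply Rmult_le_compat_r with (r := E) in F8; [|lra]. lra. }
    assert (exp (3 * eta / 4) * exp DD * (P1 * X * E) <= exp (3 * eta / 4) * exp DD).
    { assert (0 < exp (3 * eta / 4) * exp DD) by (apply Rmult_lt_0_compat; lra).
      pattern (exp (3 * eta / 4) * exp DD) at 2; rewrite <- Rmult_1_r.
      apply Rmult_le_compat_l; lra. }
    assert (g / 2 * Kc < g / 2 * E) by (apply Rmult_lt_compat_l; lra).
    lra.
Qed.
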